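(* Let $w\in W$ be a strong minuscule element, and let $w=s_{i_1}\cdots s_{i_r}$ be any reduced expression of $w$. Then for every $i\in I$ we have $\#\{1\le p\le r \mid i_p=i\}\ge 1$; that is, every simple reflection $s_1,\dots,s_n$ appears at least once in every reduced expression of $w$.
   Context: Let $\mathfrak g$ be a finite-dimensional simple Lie algebra over $\mathbb C$ of type $\mathrm A_n$, $\mathrm B_n$, $\mathrm C_n$ or $\mathrm D_n$, with index set $I=\{1,\dots,n\}$, Cartan subalgebra $\mathfrak h$, pairing $\langle\cdot,\cdot\rangle:\mathfrak h^*\times\mathfrak h\to\mathbb C$, simple roots $\alpha_i$, simple coroots $\alpha_i^\vee$, fundamental weights $\Lambda_i$, integral weights $P=\bigoplus_{i\in I}\mathbb Z\Lambda_i$, dominant integral weights $P^+=\sum_{i\in I}\mathbb Z_{\ge0}\Lambda_i$, and Weyl group $W$ generated by the simple reflections $s_i$ in $\alpha_i$. For $\Lambda\in P$, an element $w\in W$ is called $\Lambda$-minuscule if there is a reduced expression $w=s_{i_1}\cdots s_{i_r}$ such that $\langle s_{i_{p+1}}\cdots s_{i_r}(\Lambda),\alpha_{i_p}^\vee\rangle=1$ for all $1\le p\le r$. An element $w$ is dominant minuscule if it is $\Lambda$-minuscule for some $\Lambda\in P^+$. A dominant minuscule element $w$ is called strong minuscule if there exists a unique $\Lambda\in P^+$ such that $w$ is $\Lambda$-minuscule. *)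

(* Defs.v *)
From mathcomp Require Import all_boot all_order all_algebra.
Set Implicit Arguments. Unset Strict Implicit. Unset Printing Implicit Defensive.
Import Order.TTheory GRing.Theory Num.Theory.
Local Open Scope ring_scope.

(* Classical Cartan types (Bourbaki labelling, indices 0..n-1 for 1..n). *)
Inductive cartan_type := TA | TB | TC | TD.

Definition valid_type (t : cartan_type) (n : nat) : bool :=
  match t with
  | TA => (1 <= n)%N | TB => (2 <= n)%N | TC => (2 <= n)%N | TD => (4 <= n)%N
  end.

Definition chain_adj (i j : nat) : bool := (i == j.+1) || (j == i.+1).

(* Cartan matrix entry a_{ij} = <alpha_i^vee, alpha_j> (0-indexed). *)
Definition cartan (t : cartan_type) (n i j : nat) : int :=
  if i == j then 2 else
  match t with
  | TA => if chain_adj i j then -1 else 0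
  | TB => (* alpha_n short: a_{n,n-1} = -2 *)
      if (i == n.-1) && (j == n.-2) then -2
      else if chain_adj i j then -1 else 0
  | TC => (* alpha_n long: a_{n-1,n} = -2 *)
      if (i == n.-2) && (j == n.-1) then -2
      else if chain_adj i j then -1 else 0
  | TD => (* chain 1 - ... - (n-1), and n attached to n-2 *)
      if (chain_adj i j && (maxn i j <= n.-2)%N)
         || ((i == (n - 3)%N) && (j == n.-1)) || ((i == n.-1) && (j == (n - 3)%N))
      then -1 else 0
  end.

(* Integral weights, in the basis of fundamental weights:
   lam i = <lam, alpha_i^vee>. *)
Definition weight (n : nat) := {ffun 'I_n -> int}.

(* simple reflection s_j(lam) = lam - <lam, alpha_j^vee> alpha_j *)
Definition sref (t : cartan_type) (n : nat) (j : 'I_n) (lam : weight n) : weight n :=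
  [ffun i : 'I_n => lam i - lam j * cartan t n i j].

Fixpoint wact (t : cartan_type) (n : nat) (s : seq 'I_n) (lam : weight n) : weight n :=
  if s is i :: s' then sref t i (wact t s' lam) else lam.

(* Two words represent the same Weyl group element iff they act identically
   on P (P spans h^dual, and W acts faithfully on h^dual). *)
Definition weq (t : cartan_type) (n : nat) (s u : seq 'I_n) : Prop :=
  forall lam : weight n, wact t s lam = wact t u lam.

Definition reduced (t : cartan_type) (n : nat) (s : seq 'I_n) : Prop :=
  forall u : seq 'I_n, weq t s u -> (size s <= size u)%N.

Definition dominant (n : nat) (lam : weight n) : Prop := forall i, 0 <= lam i.

Definition minuscule (t : cartan_type) (n : nat) (Lam : weight n) (w : seq 'I_n) : Prop :=
  exists u : seq 'I_n,
    [/\ weq t w u, reduced t u &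
        forall (p : nat) (Hp : (p < size u)%N),
          (wact t (drop p.+1 u) Lam) (tnth (in_tuple u) (Ordinal Hp)) = 1].

Definition dominant_minuscule (t : cartan_type) (n : nat) (w : seq 'I_n) : Prop :=
  exists Lam : weight n, dominant Lam /\ minuscule t Lam w.

Definition strong_minuscule (t : cartan_type) (n : nat) (w : seq 'I_n) : Prop :=
  exists Lam : weight n,
    [/\ dominant Lam, minuscule t Lam w &
        forall Lam' : weight n, dominant Lam' -> minuscule t Lam' w -> Lam' = Lam].

(* Main.v *)
Require Import Defs.
From mathcomp Require Import all_boot all_order all_algebra zify ring.
Set Implicit Arguments. Unset Strict Implicit. Unset Printing Implicit Defensive.
Import GRing.Theory Num.Theory.
Local Open Scope ring_scope.
Definition dl (j a : nat) : int := if j == a then 1 else 0.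
Definition prv (y : nat -> int) (r : nat) : int := if r is r'.+1 then y r' else 0.
Ltac crush := rewrite /cartan /chain_adj /dl;
  repeat (match goal with
    | |- context[(?x == ?y)%N] => case: (x =P y) => ?
    | |- context[(?x <= ?y)%N] => case: (leqP x y) => ?
    end; rewrite /=); lia.
Definition cform (a : int) p (b : int) q (c : int) r (d : int) e j :=
  a * dl j p + b * dl j q + c * dl (j.+1) r + d * dl j e.
Lemma cA n k j : cartan TA n k j = cform 2 k (-1) k.+1 (-1) k 0 0 j.
Proof. rewrite /cform; crush. Qed.
Lemma cB1 n k j : k != n.-1 -> cartan TB n k j = cform 2 k (-1) k.+1 (-1) k 0 0 j.
Proof. move=> H; rewrite /cform; move: H; crush. Qed.
Lemma cB2 n j : (2 <= n)%N -> cartan TB n n.-1 j = cform 2 n.-1 (-1) n (-2) n.-1 0 0 j.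
Proof. move=> H; rewrite /cform; crush. Qed.
Lemma cC1 n k j : k != n.-2 -> cartan TC n k j = cform 2 k (-1) k.+1 (-1) k 0 0 j.
Proof. move=> H; rewrite /cform; move: H; crush. Qed.
Lemma cC2 n j : (2 <= n)%N -> cartan TC n n.-2 j = cform 2 n.-2 (-2) n.-1 (-1) n.-2 0 0 j.
Proof. move=> H; rewrite /cform; crush. Qed.
Lemma cD1 n k j : (k.+3 < n)%N -> cartan TD n k j = cform 2 k (-1) k.+1 (-1) k 0 0 j.
Proof. move=> H; rewrite /cform; crush. Qed.
Lemma cD3 n j : (4 <= n)%N -> (j < n)%N ->
  cartan TD n (n-3) j = cform 2 (n-3) (-1) (n-2) (-1) (n-3) (-1) (n-1) j.
Proof. move=> *; rewrite /cform; crush. Qed.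
Lemma cD2 n j : (4 <= n)%N -> cartan TD n n.-2 j = cform 2 n.-2 0 0 (-1) n.-2 0 0 j.
Proof. move=> *; rewrite /cform; crush. Qed.
Lemma cD4 n j : (4 <= n)%N -> cartan TD n n.-1 j = cform 2 n.-1 0 0 0 0 (-1) (n-3) j.
Proof. move=> *; rewrite /cform; crush. Qed.

Lemma sum_dl n (y : nat -> int) a :
  \sum_(j < n) dl j a * y j = if (a < n)%N then y a else 0.
Proof.
elim: n => [|n IH]; first by rewrite big_ord0.
rewrite big_ord_recr /= IH /dl ltnS.
case: (ltngtP a n) => H.
- by rewrite mul0r addr0.
- by rewrite mul0r addr0.
- by rewrite H mul1r add0r.
Qed.

Lemma sum_dlS n (y : nat -> int) r :
  \sum_(j < n) dl j.+1 r * y j = if r is r'.+1 then \sum_(j < n) dl j r' * y j else 0.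
Proof.
case: r => [|r]; first by apply: big1 => j _; rewrite /dl mul0r.
by apply: eq_bigr => j _; rewrite /dl eqSS.
Qed.

Lemma row_sum t n (y : nat -> int) k a p b q c r d e :
  (forall j, (n <= j)%N -> y j = 0) ->
  (forall j, (j < n)%N -> cartan t n k j = cform a p b q c r d e j) ->
  \sum_(j < n) cartan t n k j * y j = a * y p + b * y q + c * prv y r + d * y e.
Proof.
move=> Hy Hc.
have E : forall z, \sum_(j < n) dl j z * y j = y z.
  move=> z; rewrite sum_dl; case: ltnP => // H; by rewrite Hy.
rewrite (eq_bigr (fun j : 'I_n => a * (dl j p * y j) + b * (dl j q * y j)
   + c * (dl j.+1 r * y j) + d * (dl j e * y j))); last first.
  move=> j _; rewrite Hc // /cform; ring.
rewrite !big_split /= -!mulr_sumr !E sum_dlS /prv.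
by clear Hc; case: r => [|r]; rewrite ?E ?mulr0.
Qed.

Lemma chain (y : nat -> int) m :
  (forall k, (k < m)%N -> 2 * y k - y k.+1 - prv y k = 0) ->
  forall k, (k <= m)%N -> y k = (k.+1)%:Z * y 0%N.
Proof.
move=> H.
have Q : forall k, (k < m)%N -> y k = (k.+1)%:Z * y 0%N /\ y k.+1 = (k.+2)%:Z * y 0%N.
  elim => [|k IH] Hk.
    split; first by rewrite mul1r.
    have := H 0%N Hk; rewrite /prv /=; lia.
  have [h1 h2] := IH (ltnW Hk); split => //.
  have := H k.+1 Hk; rewrite /prv /= h1 h2; nia.
case => [|k] Hk; first by rewrite mul1r.
exact: (Q k Hk).2.
Qed.

Lemma kernel t n (y : nat -> int) : valid_type t n ->
  (forall j, (n <= j)%N -> y j = 0) ->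
  (forall k, (k < n)%N -> \sum_(j < n) cartan t n k j * y j = 0) ->
  forall j, y j = 0.
Proof.
move=> Hv Hy Hr.
have R : forall k a p b q c r d e, (k < n)%N ->
    (forall j, (j < n)%N -> cartan t n k j = cform a p b q c r d e j) ->
    a * y p + b * y q + c * prv y r + d * y e = 0.
  by move=> k a p b q c r d e Hk Hc; rewrite -(row_sum Hy Hc); apply: Hr.
case: t Hv Hr R => /= Hv Hr R.
-
  have {}Ch : forall k, (k <= n)%N -> y k = (k.+1)%:Z * y 0%N.
    apply: chain => k Hk.
    have := R k _ _ _ _ _ _ _ _ Hk (fun j _ => cA n k j); rewrite /prv; lia.
  have y0 : y 0%N = 0.
    have := Ch n (leqnn n); rewrite Hy //; nia.
  move=> j; case: (leqP j n) => Hj; last by rewrite Hy // ltnW.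
  by rewrite Ch // y0 mulr0.
-
  case: n Hv Hy Hr R => [|[|n]] // _ Hy Hr R.
  have Ch : forall k, (k <= n.+1)%N -> y k = (k.+1)%:Z * y 0%N.
    apply: chain => k Hk.
    have Hk' : (k < n.+2)%N by lia.
    have Hne : k != n.+2.-1 by rewrite /=; lia.
    have := R k _ _ _ _ _ _ _ _ Hk' (fun j _ => cB1 j Hne); rewrite /prv; lia.
  have y0 : y 0%N = 0.
    have := R n.+1 _ _ _ _ _ _ _ _ (ltnSn _) (fun j _ => cB2 j (isT : (2 <= n.+2)%N)).
    rewrite /prv /= (Ch n.+1) // (Ch n) // (Hy n.+2) //; nia.
  move=> j; case: (leqP j n.+1) => Hj; last by rewrite Hy.
  by rewrite Ch // y0 mulr0.
-
  case: n Hv Hy Hr R => [|[|n]] // _ Hy Hr R.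
  have Ch : forall k, (k <= n)%N -> y k = (k.+1)%:Z * y 0%N.
    apply: chain => k Hk.
    have Hk' : (k < n.+2)%N by lia.
    have Hne : k != n.+2.-2 by rewrite /=; lia.
    have := R k _ _ _ _ _ _ _ _ Hk' (fun j _ => cC1 j Hne); rewrite /prv; lia.
  have Hp : prv y n = n%:Z * y 0%N.
    case: n Ch {Hy Hr R} => [|n] Ch //=; first by rewrite mul0r.
    by rewrite Ch.
  have Hne : n.+1 != n.+2.-2 by rewrite /=; lia.
  have r2 := R n.+1 _ _ _ _ _ _ _ _ (ltnSn _) (fun j _ => cC1 j Hne).
  have r1 := R n _ _ _ _ _ _ _ _ (ltnW (ltnSn _)) (fun j _ => cC2 j (isT : (2 <= n.+2)%N)).
  move: r1 r2; rewrite /= Hp (Ch n) // (Hy n.+2) // => r1 r2.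
  have y0 : y 0%N = 0 by nia.
  have y1 : y n.+1 = 0 by nia.
  move=> j; case: (leqP j n) => Hj; first by rewrite Ch // y0 mulr0.
  case: (leqP j n.+1) => Hj'; last by rewrite Hy.
  by have -> : j = n.+1 by lia.
-
  case: n Hv Hy Hr R => [|[|[|[|n]]]] // _ Hy Hr R.
  have Ch : forall k, (k <= n.+1)%N -> y k = (k.+1)%:Z * y 0%N.
    apply: chain => k Hk.
    have Hk' : (k < n.+4)%N by lia.
    have Hlt : (k.+3 < n.+4)%N by lia.
    have := R k _ _ _ _ _ _ _ _ Hk' (fun j _ => cD1 j Hlt); rewrite /prv; lia.
  have Hk3 : (n.+4 - 3 < n.+4)%N by lia.
  have r1 := R _ _ _ _ _ _ _ _ _ Hk3
     (fun j Hj => cD3 (isT : (4 <= n.+4)%N) Hj).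
  have r2 := R n.+2 _ _ _ _ _ _ _ _ (ltac:(lia) : (n.+2 < n.+4)%N)
     (fun j _ => cD2 j (isT : (4 <= n.+4)%N)).
  have r3 := R n.+3 _ _ _ _ _ _ _ _ (ltac:(lia) : (n.+3 < n.+4)%N)
     (fun j _ => cD4 j (isT : (4 <= n.+4)%N)).
  move: r1 r2 r3; rewrite !subSS !subn0 /prv /= (Ch n.+1) // (Ch n) // => r1 r2 r3.
  have y0 : y 0%N = 0 by nia.
  have y2 : y n.+2 = 0 by nia.
  have y3 : y n.+3 = 0 by nia.
  move=> j; case: (leqP j n.+1) => Hj; first by rewrite Ch // y0 mulr0.
  case: (leqP j n.+3) => Hj'; last by rewrite Hy.
  by case: (j =P n.+2) => [->|?] //; have -> : j = n.+3 by lia.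
Qed.

Fixpoint rc t n (s : seq 'I_n) (lam : weight n) (j : nat) : int :=
  if s is a :: v then rc t v lam j + dl j a * wact t v lam a else 0.

Lemma wact_rc t n (s : seq 'I_n) lam (k : 'I_n) :
  wact t s lam k = lam k - \sum_(j < n) cartan t n k j * rc t s lam j.
Proof.
elim: s => [|a v IH] /=.
  by rewrite big1 ?subr0 // => j _; rewrite mulr0.
rewrite /sref ffunE IH.
have -> : \sum_(j < n) cartan t n k j * (rc t v lam j + dl j a * wact t v lam a)
   = \sum_(j < n) cartan t n k j * rc t v lam j
     + \sum_(j < n) dl j a * (cartan t n k j * wact t v lam a).
  by rewrite -big_split; apply: eq_bigr => j _ /=; ring.
rewrite (sum_dl n (fun j => cartan t n k j * wact t v lam a)) ltn_ord; ring.
Qed.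

Lemma rc_out t n (s : seq 'I_n) lam j : (forall a, a \in s -> val a != j) -> rc t s lam j = 0.
Proof.
elim: s => [|a v IH] //= H.
rewrite IH; last by move=> b Hb; apply: H; rewrite inE Hb orbT.
rewrite /dl; case: eqP => [E|_]; last by rewrite mul0r addr0.
by move: (H a (mem_head _ _)); rewrite E eqxx.
Qed.

Lemma rc_big t n (s : seq 'I_n) lam j : (n <= j)%N -> rc t s lam j = 0.
Proof.
move=> Hj; apply: rc_out => a _; apply/eqP => E.
by move: (ltn_ord a); rewrite E ltnNge Hj.
Qed.

Lemma rc_count t n (u : seq 'I_n) (Lam : weight n) :
  (forall (p : nat) (Hp : (p < size u)%N),
     (wact t (drop p.+1 u) Lam) (tnth (in_tuple u) (Ordinal Hp)) = 1) ->
  forall i : 'I_n, rc t u Lam i = (count_mem i u)%:Z.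
Proof.
elim: u => [|a v IH] H i //=.
have H0 := H 0%N isT.
rewrite (tnth_nth a) /= drop0 in H0.
rewrite IH; last first.
  move=> p Hp; have := H p.+1 Hp.
  by rewrite !(tnth_nth a).
rewrite H0 mulr1 /dl PoszD addrC; congr (_ + _).
case: (nat_of_ord i =P a) => [/val_inj ->|ne]; first by rewrite eqxx.
case: eqP => // E; by rewrite E in ne.
Qed.

Definition addw n (l m : weight n) : weight n := [ffun k => l k + m k].
Definition fw n (i : 'I_n) : weight n := [ffun k => (k == i)%:Z].

Lemma wact_add t n (s : seq 'I_n) l m :
  wact t s (addw l m) = addw (wact t s l) (wact t s m).
Proof.
elim: s => [|a v IH] //=; rewrite IH; apply/ffunP => k; rewrite !ffunE; ring.
Qed.

Lemma wact_fw t n (s : seq 'I_n) i : i \notin s -> wact t s (fw i) = fw i.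
Proof.
elim: s => [|a v IH] //=; rewrite inE negb_or => /andP [ne /IH ->].
apply/ffunP => k; rewrite !ffunE [a == i]eq_sym (negbTE ne) mul0r subr0 //.
Qed.



Theorem proposition4p2 (t : cartan_type) (n : nat) (ht : valid_type t n)
  (w : seq 'I_n) (hw : strong_minuscule t w)
  (s : seq 'I_n) (hs : weq t w s) (hred : reduced t s) :
  forall i : 'I_n, (1 <= count_mem i s)%N.
Proof.
move=> i; rewrite lt0n; apply/negP => /eqP /count_memPn Hi.
case: hw => Lam [Hdom [u [Hwu Hred Hcond]] Huniq].
have Hrc : forall j, (rc t u Lam j - rc t s Lam j) = 0.
  apply: (kernel ht).
    by move=> j Hj; rewrite !rc_big // subrr.
  move=> k Hk.
  have E1 := wact_rc t u Lam (Ordinal Hk).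
  have E2 := wact_rc t s Lam (Ordinal Hk).
  rewrite -(Hwu Lam) (hs Lam) E2 /= in E1.
  rewrite (eq_bigr (fun j : 'I_n => cartan t n k j * rc t u Lam j
                      - cartan t n k j * rc t s Lam j)); last by move=> j _; rewrite mulrBr.
  rewrite sumrB; apply/eqP; rewrite subr_eq0; apply/eqP.
  by move/addrI: E1 => /oppr_inj.
have Hiu : i \notin u.
  have := Hrc i; rewrite (rc_count Hcond) rc_out; last first.
    by move=> a Ha; apply/eqP => /val_inj E; move: Hi; rewrite -E Ha.
  by rewrite subr0 => /eqP; rewrite eqz_nat => /eqP /count_memPn.
have Hdom' : dominant (addw Lam (fw i)).
  by move=> k; rewrite !ffunE addr_ge0.
have Hmin' : minuscule t (addw Lam (fw i)) w.
  exists u; split => // p Hp.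
  rewrite wact_add wact_fw; last first.
    by apply: contra Hiu; apply: mem_drop.
  rewrite ffunE Hcond ffunE.
  have : tnth (in_tuple u) (Ordinal Hp) \in u by apply: (mem_tnth _ (in_tuple u)).
  case: eqP => [->|_ _]; first by rewrite (negbTE Hiu).
  by rewrite addr0.
have := Huniq _ Hdom' Hmin'.
move/(congr1 (fun f : weight n => f i)); rewrite !ffunE eqxx.
move/eqP; rewrite -subr_eq0 addrC addKr //.
Qed.
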